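(* Let $G$ be an almost well-covered $\{C_3,C_4,C_5,C_7\}$-free graph with no vertex of type $2$. Then every connected component of $G_0$ is isomorphic to one of $P_1$, $P_2$, $P_3$, $P_4$, $P_5$, $P_6$, $P_7$, $P_8$, $P_{10}$, $C_6$, $C_8$, $C_9$, $C_{10}$, $C_{11}$, $C_{13}$.
   Context: All graphs are finite and simple. $P_n$ and $C_n$ denote the path and cycle on $n$ vertices; $G$ is $\{C_3,C_4,C_5,C_7\}$-free if it has no induced subgraph isomorphic to any of these cycles. For a graph $G$, $\alpha(G)$ is the maximum size of an independent set and $i(G)$ the minimum size of an inclusion-maximal independent set; $G$ is almost well-covered if $\alpha(G)-i(G)=1$. Types of vertices: let $U$ be the set of vertices of $G$ whose connected component is a complete graph. In $G-U$, vertices of degree $1$ are leaves and the others are internal vertices. An internal vertex adjacent to exactly $k$ leaves is of type $k$; every vertex of $U$ is of type $0$. $G_0$ denotes the subgraph of $G$ induced by all vertices of type $0$. *)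

(* Defs.v *)
(* A finite simple graph is a symmetric irreflexive relation
   e : rel T on a finType T. *)
From mathcomp Require Import all_boot.
Set Implicit Arguments. Unset Strict Implicit. Unset Printing Implicit Defensive.

Section Graphs.
Variables (T : finType) (e : rel T).

Definition path_adj (i j : nat) : bool := (j == i.+1) || (i == j.+1).
Definition cyc_adj (k : nat) (i j : nat) : bool :=
  (j == i.+1 %% k) || (i == j.+1 %% k).

Definition has_induced (n : nat) (adj : nat -> nat -> bool) : Prop :=
  exists f : 'I_n -> T, injective f /\ forall i j : 'I_n, e (f i) (f j) = adj i j.

Definition induced_iso (V : {set T}) (n : nat) (adj : nat -> nat -> bool) : Prop :=
  exists f : 'I_n -> T, [/\ injective f, V = f @: [set: 'I_n] &
    forall i j : 'I_n, e (f i) (f j) = adj i j].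

Definition independent (A : {set T}) : bool :=
  [forall x in A, forall y in A, ~~ e x y].

Definition maximal_independent (A : {set T}) : Prop :=
  independent A /\ forall B : {set T}, independent B -> A \subset B -> B = A.

Definition alpha : nat := \max_(A : {set T} | independent A) #|A|.

(* i(G): minimum size of an inclusion-maximal independent set *)
Definition indep_dom : nat :=
  \big[minn/#|T|]_(A : {set T} | [forall B : {set T},
      (independent B && (A \subset B)) ==> (B == A)] && independent A) #|A|.

Definition almost_well_covered : Prop := alpha - indep_dom = 1.

Definition restr (S : {set T}) : rel T := fun u v => [&& u \in S, v \in S & e u v].
Definition comp_in (S : {set T}) (x : T) : {set T} := [set y | connect (restr S) x y].

Definition Uset : {set T} :=
  [set x | [forall y in comp_in setT x, forall z in comp_in setT x,
             (y != z) ==> e y z]].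

Definition degGU (x : T) : nat := #|[set y in ~: Uset | e x y]|.
Definition is_leaf (x : T) : bool := (x \notin Uset) && (degGU x == 1).
Definition is_internal (x : T) : bool := (x \notin Uset) && (degGU x != 1).

Definition is_type (x : T) (k : nat) : bool :=
  ((x \in Uset) && (k == 0)) ||
  (is_internal x && (#|[set y in ~: Uset | e x y && is_leaf y]| == k)).

Definition G0set : {set T} := [set x | is_type x 0].

End Graphs.

(* Main.v *)
Require Import Defs.
From mathcomp Require Import all_boot zify.
Set Implicit Arguments. Unset Strict Implicit. Unset Printing Implicit Defensive.

Section Main.
Variables (T : finType) (e : rel T).
Hypothesis e_sym : symmetric e.
Hypothesis e_irr : irreflexive e.

Local Notation G0 := (G0set e).
Local Notation U := (Uset e).

Lemma indepP (A : {set T}) :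
  reflect (forall x y, x \in A -> y \in A -> ~~ e x y) (independent e A).
Proof.
apply: (iffP forall_inP) => [H x y xA yA | H x xA].
  by move/forall_inP: (H x xA) => /(_ y yA).
by apply/forall_inP => y yA; apply: H.
Qed.

Lemma indepS (A B : {set T}) : A \subset B -> independent e B -> independent e A.
Proof.
move=> /subsetP sAB /indepP iB; apply/indepP => x y xA yA; apply: iB; exact: sAB.
Qed.

Lemma conn_sym S : connect_sym (restr e S).
Proof.
apply: sym_connect_sym => x y; rewrite /restr e_sym.
by case: (x \in S); case: (y \in S).
Qed.

Lemma comp_edge a b : e a b -> comp_in e setT a = comp_in e setT b.
Proof.
move=> eab; apply/setP => z; rewrite !inE.
have ab : restr e setT a b by rewrite /restr !inE eab.
apply/idP/idP => H.
  apply: connect_trans H; rewrite (conn_sym setT); exact: connect1.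
by apply: connect_trans H; exact: connect1.
Qed.

Lemma U_edge a b : e a b -> (a \in U) = (b \in U).
Proof. by move=> eab; rewrite /Uset !inE (comp_edge eab). Qed.

Lemma leaf_uniq l u u' : is_leaf e l -> e l u -> e l u' -> u = u'.
Proof.
case/andP => lU /eqP d1 lu lu'.
move/eqP/cards1P: d1 => [c Hc].
have : u \in [set y in ~: U | e l y] by rewrite in_set in_setC lu -(U_edge lu) lU.
have : u' \in [set y in ~: U | e l y] by rewrite in_set in_setC lu' -(U_edge lu') lU.
by rewrite Hc !in_set1 => /eqP -> /eqP ->.
Qed.

Lemma leaf_notG0 l : is_leaf e l -> l \notin G0.
Proof.
case/andP => lU d1; rewrite /G0set inE /is_type (negbTE lU) /= /is_internal lU d1 /=.
by [].
Qed.

Lemma leaf_G0 l h : is_leaf e l -> h \in G0 -> ~~ e h l.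
Proof.
move=> ll; rewrite /G0set inE /is_type => /orP [/andP [hU _]|/andP [/andP [hU _] c0]].
  apply/negP => hl; move: ll; rewrite /is_leaf -(U_edge hl) hU //.
apply/negP => hl.
have : l \in [set y in ~: U | e h y && is_leaf e y].
  by rewrite in_set in_setC hl ll andbT -(U_edge hl) hU.
by move: c0; rewrite cards_eq0 => /eqP ->; rewrite in_set0.
Qed.

Lemma N_leaf x : x \notin G0 -> ~~ is_leaf e x -> exists2 l, is_leaf e l & e x l.
Proof.
rewrite /G0set inE /is_type /is_leaf negb_or => /andP [xU1 xi] xl.
have xU : x \notin U by move: xU1; case: (x \in U).
have : is_internal e x by rewrite /is_internal xU; move: xl; rewrite xU.
move=> xint; move: xi; rewrite xint /= => c.
have : 0 < #|[set y in ~: U | e x y && is_leaf e y]| by rewrite lt0n.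
case/card_gt0P => l; rewrite in_set => /andP [_ /andP [xl' ll]]; by exists l.
Qed.

Lemma card_disjU (A B : {set T}) : (forall x, x \in A -> x \notin B) ->
  #|A :|: B| = #|A| + #|B|.
Proof.
move=> H; rewrite -cardsUI.
suff -> : A :&: B = set0 by rewrite cards0 addn0.
apply/setP => x; rewrite !inE; apply/negP => /andP [xA xB].
by move: (H x xA); rewrite xB.
Qed.

Lemma card_U_le (A B : {set T}) : #|A :|: B| <= #|A| + #|B|.
Proof. rewrite -cardsUI; exact: leq_addr. Qed.

Lemma ext_max (D C : {set T}) : C \subset D -> independent e C ->
  exists S : {set T}, [/\ C \subset S, S \subset D, independent e S &
    forall d, d \in D -> d \notin S -> exists2 s, s \in S & e d s].
Proof.
move=> CD iC.
pose P := fun S : {set T} => [&& C \subset S, S \subset D & independent e S].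
have PC : P C by rewrite /P CD iC subxx.
case: (arg_maxnP (fun S : {set T} => #|S|) PC) => S /and3P [CS SD iS] Smax.
exists S; split => // d dD dS.
case: (boolP [exists s in S, e d s]) => [/exists_inP [s sS ds] | H]; first by exists s.
have : P (d |: S).
  rewrite /P (subset_trans CS (subsetUr _ _)) subUset sub1set dD SD /=.
  apply/indepP => x y; rewrite !inE => /orP [/eqP ->|xS] /orP [/eqP ->|yS].
  - by rewrite e_irr.
  - by apply/negP => dy; move/exists_inP: H; apply; exists y.
  - by apply/negP => xd; move/exists_inP: H; apply; exists x => //; rewrite e_sym.
  - by move/indepP: iS; apply.
move/Smax; rewrite cardsU1 dS /=; lia.
Qed.


Lemma bigmin_le (I : finType) (P : pred I) (F : I -> nat) x i :
  P i -> \big[minn/x]_(j | P j) F j <= F i.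
Proof.
move=> Pi; rewrite /index_enum; have : i \in Finite.enum I by rewrite -enumT mem_enum.
elim: (Finite.enum I) => [//|a r IH]; rewrite big_cons in_cons => /orP [/eqP <-|ir].
  by rewrite Pi geq_minl.
case: (P a); last exact: IH.
exact: leq_trans (geq_minr _ _) (IH ir).
Qed.

Lemma key (H J S W : {set T}) :
  alpha e - indep_dom e = 1 ->
  H \subset G0 -> (forall h t, h \in H -> t \in G0 -> e h t -> t \in H) ->
  J \subset H -> independent e J -> S \subset H ->
  (forall w, w \in W -> w \notin H) -> independent e (S :|: W) ->
  (forall h, h \in H -> h \notin S -> exists2 u, u \in S :|: W & e h u) ->
  #|J| <= #|S| + 1.
Proof.
move=> awc /subsetP HG0 Hcl /subsetP JH iJ /subsetP SH WH iSW Sdom.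
have [K [SWK _ iK Kmax]] := ext_max (subsetT (S :|: W)) iSW.
have dK : indep_dom e <= #|K|.
  rewrite /indep_dom; apply: (bigmin_le (fun A : {set T} => #|A|)).
  rewrite iK andbT; apply/forallP => B; apply/implyP => /andP [iB KB].
  rewrite eqEsubset KB andbT; apply/subsetP => b bB.
  case: (boolP (b \in K)) => // bK.
  have [s sK bs] := Kmax b (in_setT b) bK.
  by move/indepP: iB => /(_ b s bB (subsetP KB s sK)); rewrite bs.
have KH : forall u, u \in K -> u \in H -> u \in S.
  move=> u uK uH; case: (boolP (u \in S)) => // uS.
  have [w wSW uw] := Sdom u uH uS.
  by move/indepP: iK => /(_ u w uK (subsetP SWK w wSW)); rewrite uw.
pose Nset := [set u | (u \notin G0) && ~~ is_leaf e u].
pose X := K :&: Nset.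
pose Rest := [set u in K | (u \notin H) && (u \notin Nset)].
pose LX := [set l | is_leaf e l && [exists x in X, e x l]].
have LXK : forall l, l \in LX -> l \notin K.
  move=> l; rewrite inE => /andP [_ /exists_inP [x]]; rewrite inE => /andP [xK _] xl.
  apply/negP => lK; by move/indepP: iK => /(_ x l xK lK); rewrite xl.
have LXleaf : forall l, l \in LX -> is_leaf e l by move=> l; rewrite inE => /andP [].
have iJ' : independent e (J :|: Rest :|: LX).
  apply/indepP => x y; rewrite !in_setU.
  have nJR : forall j r, j \in J -> r \in Rest -> ~~ e j r.
    move=> j r jJ; rewrite inE => /andP [rK /andP [rH rN]]; apply/negP => jr.
    case: (boolP (r \in G0)) => rG0.
      by move: rH; rewrite (Hcl j r (JH j jJ) rG0 jr).
    case: (boolP (is_leaf e r)) => rl.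
      by move: (leaf_G0 rl (HG0 j (JH j jJ))); rewrite jr.
    by move: rN; rewrite inE rG0 rl.
  have nJL : forall j l, j \in J -> l \in LX -> ~~ e j l.
    by move=> j l jJ lL; apply: leaf_G0 (LXleaf l lL) (HG0 j (JH j jJ)).
  have nRL : forall r l, r \in Rest -> l \in LX -> ~~ e r l.
    move=> r l; rewrite inE => /andP [rK /andP [rH rN]].
    rewrite inE => /andP [ll /exists_inP [z]]; rewrite inE => /andP [zK zN] zl.
    apply/negP => rl; rewrite e_sym in rl.
    by move: rN; rewrite -(leaf_uniq ll (etrans (e_sym _ _) zl) rl) zN.
  have nLL : forall l l', l \in LX -> l' \in LX -> ~~ e l l'.
    move=> l l'; rewrite inE => /andP [ll /exists_inP [z]]; rewrite inE => /andP [zK zN] zl.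
    move=> l'L; apply/negP => ll'.
    have := leaf_uniq ll (etrans (e_sym _ _) zl) ll'.
    by move=> zl'; move: zN; rewrite zl' inE (LXleaf l' l'L) andbF.
  have nRR : forall r r', r \in Rest -> r' \in Rest -> ~~ e r r'.
    move=> r r'; rewrite !inE => /andP [rK _] /andP [r'K _].
    by move/indepP: iK; apply.
  have nJJ : forall j j', j \in J -> j' \in J -> ~~ e j j' by move/indepP: iJ.
  move=> /orP [/orP [xJ|xR]|xL] /orP [/orP [yJ|yR]|yL].
  all: try by auto.
  all: try (rewrite e_sym; by auto).
have cJ' : #|J :|: Rest :|: LX| = #|J| + #|Rest| + #|LX|.
  rewrite card_disjU ?card_disjU //.
    move=> x xJ; rewrite inE; apply/negP => /andP [_ /andP [xH _]].
    by move: xH; rewrite (JH x xJ).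
  move=> x; rewrite in_setU => /orP [xJ|xR].
    apply/negP => xL; move: (leaf_notG0 (LXleaf x xL)).
    by rewrite (HG0 x (JH x xJ)).
  by apply/negP => xL; move: (LXK x xL); move: xR; rewrite inE => /andP [->].
have aJ' : #|J :|: Rest :|: LX| <= alpha e.
  rewrite /alpha; exact: (@leq_bigmax_cond _ (fun A => independent e A) (fun A : {set T} => #|A|) _ iJ').
have cK : #|K| <= #|S| + #|X| + #|Rest|.
  apply: (leq_trans _ (leq_trans (card_U_le _ _) (leq_add (card_U_le _ _) (leqnn _)))).
  apply: subset_leq_card; apply/subsetP => u uK; rewrite !in_setU.
  case: (boolP (u \in H)) => uH; first by rewrite (KH u uK uH).
  case: (boolP (u \in Nset)) => uN.
    by apply/orP; left; apply/orP; right; rewrite /X in_setI uK uN.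
  by apply/orP; right; rewrite /Rest in_set uK uH uN.
have cX : #|X| <= #|LX|.
  pose g := fun l => odflt l [pick u | e l u].
  apply: (leq_trans _ (leq_imset_card g LX)); apply: subset_leq_card.
  apply/subsetP => x; rewrite inE => /andP [xK xN].
  have := xN; rewrite inE => /andP [xG xl].
  have [l ll xl'] := N_leaf xG xl.
  apply/imsetP; exists l.
    rewrite inE ll /=; apply/exists_inP; exists x => //; by rewrite inE xK xN.
  rewrite /g; case: pickP => [u lu|H0] /=.
    by apply: (leaf_uniq ll); rewrite // e_sym.
  by move: (H0 x); rewrite e_sym xl'.
move: awc aJ' dK cK cX; rewrite cJ'; lia.
Qed.


Definition avoid (H W : {set T}) := [set h in H | [forall w in W, ~~ e h w]].

Lemma localW (H W C R Jl : {set T}) :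
  alpha e - indep_dom e = 1 ->
  H \subset G0 -> (forall h t, h \in H -> t \in G0 -> e h t -> t \in H) ->
  (forall w, w \in W -> w \notin H) -> independent e W ->
  C \subset avoid H W -> independent e C -> R \subset H ->
  (forall r, r \in R -> r \in avoid H W -> r \notin C -> exists2 c, c \in C & e r c) ->
  Jl \subset R -> independent e Jl ->
  (forall j u, j \in Jl -> u \in H -> u \notin R -> e j u -> exists2 c, c \in C & e u c) ->
  #|Jl| <= #|C :&: R| + 1.
Proof.
move=> awc HG0 Hcl WH iW CD iC RH Rdom JlR iJl Jlout.
have [S [CS SD iS Sdom]] := ext_max CD iC.
have SH : S \subset H.
  apply: (subset_trans SD); apply/subsetP => x; rewrite inE; by case/andP.
have SRC : S :&: R = C :&: R.
  apply/setP => x; rewrite !inE; apply/idP/idP => /andP [xS xR]; rewrite xR andbT //.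
    case: (boolP (x \in C)) => // xC.
    have [c cC xc] := Rdom x xR (subsetP SD x xS) xC.
    by move/indepP: iS => /(_ x c xS (subsetP CS c cC)); rewrite xc.
  exact: (subsetP CS).
have cJ : #|(S :\: R) :|: Jl| = #|S :\: R| + #|Jl|.
  apply: card_disjU => x; rewrite inE => /andP [xR _]; apply/negP => xJ.
  by move: xR; rewrite (subsetP JlR x xJ).
have cS : #|S| = #|S :\: R| + #|C :&: R|.
  by rewrite -SRC addnC cardsID.
suff Hk : #|(S :\: R) :|: Jl| <= #|S| + 1 by move: Hk; rewrite cJ cS; lia.
apply: (key awc HG0 Hcl).
- rewrite subUset (subset_trans (subsetDl _ _) SH) (subset_trans JlR RH) //.
- apply/indepP => x y; rewrite !inE.
  have cross : forall s j, s \in S -> s \notin R -> j \in Jl -> ~~ e s j.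
    move=> s j sS sR jJ; apply/negP => sj.
    have [c cC sc] := Jlout j s jJ (subsetP SH s sS) sR (etrans (e_sym _ _) sj).
    by move/indepP: iS => /(_ s c sS (subsetP CS c cC)); rewrite sc.
  move=> /orP [/andP [xR xS]|xJ] /orP [/andP [yR yS]|yJ].
  + by move/indepP: iS; apply.
  + exact: cross.
  + by rewrite e_sym; apply: cross.
  + by move/indepP: iJl; apply.
- exact: SH.
- exact: WH.
- apply/indepP => x y; rewrite !inE.
  have cross : forall s w, s \in S -> w \in W -> ~~ e s w.
    move=> s w sS wW; have := subsetP SD s sS; rewrite inE => /andP [_ /forall_inP].
    by apply.
  move=> /orP [xS|xW] /orP [yS|yW].
  + by move/indepP: iS; apply.
  + exact: cross.
  + by rewrite e_sym; apply: cross.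
  + by move/indepP: iW; apply.
- move=> h hH hS.
  case: (boolP (h \in avoid H W)) => hD.
    by have [s sS hs] := Sdom h hD hS; exists s => //; rewrite inE sS.
  move: hD; rewrite inE hH /= => /forall_inPn [w wW]; rewrite negbK => hw.
  by exists w => //; rewrite inE wW orbT.
Qed.

End Main.

Section Cyc.
Variables (T : finType) (e : rel T).
Hypothesis e_sym : symmetric e.
Hypothesis e_irr : irreflexive e.
Hypothesis free : forall k, k \in [:: 3; 4; 5; 7] -> ~ has_induced e k (cyc_adj k).

Lemma no_cycle k (s : seq T) x0 : k \in [:: 3; 4; 5; 7] -> size s = k -> uniq s ->
  (forall i j, i < k -> j < k -> e (nth x0 s i) (nth x0 s j) = cyc_adj k i j) -> False.
Proof.
move=> kin sz us H; apply: (free kin); exists (fun i : 'I_k => nth x0 s i); split.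
  move=> i j /eqP; rewrite nth_uniq ?sz // => /eqP; exact: val_inj.
by move=> i j; apply: H.
Qed.

Lemma neq_of_e a b : e a b -> a != b.
Proof. by move=> ab; apply/eqP => E; move: ab; rewrite E e_irr. Qed.

Ltac solve_e :=
  lazymatch goal with |- ?l = ?b => let b' := eval vm_compute in b in change (l = b') end;
  first [ by rewrite e_irr | assumption | by rewrite e_sym | by apply/negbTE
        | by apply/negbTE; rewrite e_sym ].

Ltac neqs := rewrite ?inE ?negb_or; repeat (apply/andP; split);
  first [ assumption | by rewrite eq_sym | by apply: neq_of_e | by rewrite eq_sym; apply: neq_of_e
        | by [] ].

Lemma cyc3 a b c : e a b -> e b c -> e c a -> False.
Proof.
move=> ab bc ca; apply: (@no_cycle 3 [:: a; b; c] a) => //=.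
  by neqs.
move=> i j hi hj.
case: i hi => [|[|[|i]]] hi //; case: j hj => [|[|[|j]]] hj //=; solve_e.
Qed.

Lemma cyc4 a b c d : e a b -> e b c -> e c d -> e d a -> a != c -> b != d -> False.
Proof.
move=> ab bc cd da ac bd.
have nac : ~~ e a c by apply/negP => H; apply: (cyc3 ab bc); rewrite e_sym.
have nbd : ~~ e b d by apply/negP => H; apply: (cyc3 bc cd); rewrite e_sym.
apply: (@no_cycle 4 [:: a; b; c; d] a) => //=.
  by neqs.
move=> i j hi hj.
case: i hi => [|[|[|[|i]]]] hi //; case: j hj => [|[|[|[|j]]]] hj //=; solve_e.
Qed.

Lemma cyc5 a b c d f : e a b -> e b c -> e c d -> e d f -> e f a ->
  a != c -> a != d -> b != d -> b != f -> c != f -> False.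
Proof.
move=> ab bc cd df fa ac ad bd bf cf.
have nac : ~~ e a c by apply/negP => H; apply: (cyc3 ab bc); rewrite e_sym.
have nbd : ~~ e b d by apply/negP => H; apply: (cyc3 bc cd); rewrite e_sym.
have nda : ~~ e d a by apply/negP => H; apply: (cyc3 df fa); rewrite e_sym.
have nfb : ~~ e f b by apply/negP => H; apply: (cyc3 fa ab); rewrite e_sym.
have ncf : ~~ e c f by apply/negP => H; apply: (cyc3 cd df); rewrite e_sym.
apply: (@no_cycle 5 [:: a; b; c; d; f] a) => //=.
  by neqs.
move=> i j hi hj.
case: i hi => [|[|[|[|[|i]]]]] hi //; case: j hj => [|[|[|[|[|j]]]]] hj //=; solve_e.
Qed.

Lemma cyc7 a0 a1 a2 a3 a4 a5 a6 :
  e a0 a1 -> e a1 a2 -> e a2 a3 -> e a3 a4 -> e a4 a5 -> e a5 a6 -> e a6 a0 ->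
  a0 != a2 -> a0 != a3 -> a0 != a4 -> a0 != a5 ->
  a1 != a3 -> a1 != a4 -> a1 != a5 -> a1 != a6 ->
  a2 != a4 -> a2 != a5 -> a2 != a6 -> a3 != a5 -> a3 != a6 -> a4 != a6 -> False.
Proof.
move=> e01 e12 e23 e34 e45 e56 e60 n02 n03 n04 n05 n13 n14 n15 n16 n24 n25 n26 n35 n36 n46.
have t : forall x y z, e x y -> e y z -> ~~ e x z.
  by move=> x y z xy yz; apply/negP => xz; apply: (cyc3 xy yz); rewrite e_sym.
have q : forall x y z w, e x y -> e y z -> e z w -> x != z -> y != w -> ~~ e x w.
  by move=> x y z w xy yz zw xz yw; apply/negP => xw; apply: (cyc4 xy yz zw _ xz yw); rewrite e_sym.
have c02 := t _ _ _ e01 e12. have c13 := t _ _ _ e12 e23. have c24 := t _ _ _ e23 e34.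
have c35 := t _ _ _ e34 e45. have c46 := t _ _ _ e45 e56. have c50 := t _ _ _ e56 e60.
have c61 := t _ _ _ e60 e01.
have c03 := q _ _ _ _ e01 e12 e23 n02 n13. have c14 := q _ _ _ _ e12 e23 e34 n13 n24.
have c25 := q _ _ _ _ e23 e34 e45 n24 n35. have c36 := q _ _ _ _ e34 e45 e56 n35 n46.
have n50 : a5 != a0 by rewrite eq_sym.
have n61 : a6 != a1 by rewrite eq_sym.
have c40 := q _ _ _ _ e45 e56 e60 n46 n50.
have c51 := q _ _ _ _ e56 e60 e01 n50 n61.
have c62 := q _ _ _ _ e60 e01 e12 n61 n02.
apply: (@no_cycle 7 [:: a0; a1; a2; a3; a4; a5; a6] a0) => //=.
  by neqs.
move=> i j hi hj.
case: i hi => [|[|[|[|[|[|[|i]]]]]]] hi //; case: j hj => [|[|[|[|[|[|[|j]]]]]]] hj //=; solve_e.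
Qed.
End Cyc.

Lemma arith2 a b : a.+1 <= b + 2 -> b <= a - 2 -> 1 < a -> False.
Proof. lia. Qed.

Section PartA.
Variables (T : finType) (e : rel T).
Hypothesis e_sym : symmetric e.
Hypothesis e_irr : irreflexive e.
Hypothesis free : forall k, k \in [:: 3; 4; 5; 7] -> ~ has_induced e k (cyc_adj k).

Local Notation G0 := (G0set e).
Local Notation U := (Uset e).

Variables (H : {set T}) (v : T).
Hypothesis vH : v \in H.

Definition Xs := [set u in H | e v u].
Definition Ys := [set u in H | [&& u != v, u \notin Xs & [exists x in Xs, e x u]]].
Definition Rs := v |: (Xs :|: Ys).
Definition Zs := [set u in H | (u \notin Rs) && [exists y in Ys, e y u]].
Definition Y0s := [set y in Ys | [forall u in H, e y u ==> (u \in Xs)]].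

Lemma neq_mem (A : {set T}) a b : a \in A -> b \notin A -> a != b.
Proof. by move=> aA bA; apply/eqP => E; move: bA; rewrite -E aA. Qed.

Lemma XP x : x \in Xs -> (x \in H) * e v x.
Proof. by rewrite inE => /andP [-> ->]. Qed.

Lemma YP y : y \in Ys -> [/\ y \in H, y != v, y \notin Xs & exists2 x, x \in Xs & e x y].
Proof.
rewrite inE => /andP [yH /and3P [yv yX /exists_inP [x xX xy]]]; split => //; by exists x.
Qed.

Lemma ZP z : z \in Zs -> [/\ z \in H, z \notin Rs & exists2 y, y \in Ys & e y z].
Proof.
rewrite inE => /andP [zH /andP [zR /exists_inP [y yY yz]]]; split => //; by exists y.
Qed.

Lemma Y0P y : y \in Y0s -> (y \in Ys) * (forall u, u \in H -> e y u -> u \in Xs).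
Proof.
rewrite inE => /andP [yY /forall_inP Hy]; split => // u uH yu.
by move: (Hy u uH); rewrite yu.
Qed.

Lemma vX : v \notin Xs. Proof. by rewrite inE e_irr andbF. Qed.
Lemma vY : v \notin Ys. Proof. by rewrite inE eqxx andbF. Qed.
Lemma vR : v \in Rs. Proof. by rewrite /Rs in_setU1 eqxx. Qed.
Lemma XR x : x \in Xs -> x \in Rs. Proof. by move=> xX; rewrite /Rs in_setU1 in_setU xX orbT. Qed.
Lemma YR y : y \in Ys -> y \in Rs. Proof. by move=> yY; rewrite /Rs in_setU1 in_setU yY !orbT. Qed.

Lemma iX x x' : x \in Xs -> x' \in Xs -> ~~ e x x'.
Proof.
move=> /XP [_ vx] /XP [_ vx']; apply/negP => xx'.
by apply: (cyc3 e_sym e_irr free vx xx'); rewrite e_sym.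
Qed.

Lemma commX x x' u : x \in Xs -> x' \in Xs -> e x u -> e x' u -> u != v -> x != x' -> False.
Proof.
move=> /XP [_ vx] /XP [_ vx'] xu x'u uv xx'.
apply: (cyc4 e_sym e_irr free vx xu (_ : e u x') (_ : e x' v)) => //; rewrite 1?e_sym //.
by rewrite eq_sym.
Qed.

Ltac dist := first [ assumption | by rewrite eq_sym
  | by apply: (neq_mem (A := Xs))
  | by rewrite eq_sym; apply: (neq_mem (A := Xs))
  | by apply: (neq_mem (A := Ys))
  | by rewrite eq_sym; apply: (neq_mem (A := Ys))
  | by apply: (neq_mem (A := Rs))
  | by rewrite eq_sym; apply: (neq_mem (A := Rs))
  | by apply: (neq_mem (A := H))
  | by rewrite eq_sym; apply: (neq_mem (A := H)) ].

Lemma iY y y' : y \in Ys -> y' \in Ys -> ~~ e y y'.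
Proof.
move=> yY y'Y; apply/negP => yy'.
have [yH yv yX [x xX xy]] := YP yY.
have [y'H y'v y'X [x' x'X x'y']] := YP y'Y.
case: (eqVneq x x') => [E|xx'].
  by subst x'; apply: (cyc3 e_sym e_irr free xy yy'); rewrite e_sym.
have [_ vx] := XP xX. have [_ vx'] := XP x'X.
apply: (cyc5 e_sym e_irr free vx xy yy' (_ : e y' x') (_ : e x' v)); rewrite 1?e_sym //; dist.
Qed.

Lemma iZ z z' : z \in Zs -> z' \in Zs -> ~~ e z z'.
Proof.
move=> zZ z'Z; apply/negP => zz'.
have [zH zR [y yY yz]] := ZP zZ.
have [z'H z'R [y' y'Y y'z']] := ZP z'Z.
have [yH yv yX [x xX xy]] := YP yY.
have [y'H y'v y'X [x' x'X x'y']] := YP y'Y.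
have yR := YR yY. have y'R := YR y'Y. have xR := XR xX. have x'R := XR x'X.
have vR' := vR.
case: (eqVneq y y') => [E|yy'].
  by subst y'; apply: (cyc3 e_sym e_irr free yz zz'); rewrite e_sym.
case: (eqVneq x x') => [E|xx'].
  subst x'.
  apply: (cyc5 e_sym e_irr free xy yz zz' (_ : e z' y') (_ : e y' x)); rewrite 1?e_sym //; dist.
have [_ vx] := XP xX. have [_ vx'] := XP x'X.
apply: (cyc7 e_sym e_irr free vx xy yz zz' (_ : e z' y') (_ : e y' x') (_ : e x' v));
  rewrite 1?e_sym //; dist.
Qed.

Lemma wfacts w y : w \notin H -> y \in Y0s -> e w y ->
  ~~ e w v /\ (forall z, z \in Zs -> ~~ e w z).
Proof.
move=> wH y0 wy.
have [yY yH0] := Y0P y0.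
have [yH yv yX [x xX xy]] := YP yY.
have [xH vx] := XP xX.
have yR := YR yY. have xR := XR xX. have vR' := vR.
split.
  apply/negP => wv.
  apply: (cyc4 e_sym e_irr free wy (_ : e y x) (_ : e x v) (_ : e v w)); rewrite 1?e_sym //; dist.
move=> z zZ; apply/negP => wz.
have [zH zR [y' y'Y y'z]] := ZP zZ.
have [y'H y'v y'X [x' x'X x'y']] := YP y'Y.
have y'R := YR y'Y. have x'R := XR x'X.
have yy' : y != y'.
  apply/eqP => E; subst y'; move: (yH0 z zH y'z) => zX.
  by move: zR; rewrite (XR zX).
case: (eqVneq x x') => [E|xx'].
  subst x'.
  apply: (cyc5 e_sym e_irr free wy (_ : e y x) x'y' y'z (_ : e z w)); rewrite 1?e_sym //; dist.
have [x'H vx'] := XP x'X.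
apply: (cyc7 e_sym e_irr free wy (_ : e y x) (_ : e x v) vx' x'y' y'z (_ : e z w));
  rewrite 1?e_sym //; dist.
Qed.


Hypothesis awc : alpha e - indep_dom e = 1.
Hypothesis HG0 : H \subset G0.
Hypothesis Hcl : forall h t, h \in H -> t \in G0 -> e h t -> t \in H.

Lemma outnbr y : y \in Y0s -> exists2 w, w \notin H & e y w.
Proof.
move=> y0; have [yY yH0] := Y0P y0.
have [yH yv yX [x xX xy]] := YP yY.
have [xH vx] := XP xX.
have yG : y \in G0 := subsetP HG0 y yH.
have yU : y \notin U.
  apply/negP; rewrite /Uset inE => /forall_inP H1.
  have cv : v \in comp_in e setT y.
    rewrite inE; apply: (connect_trans (y := x)); apply: connect1; rewrite /restr !in_setT //=.
      by rewrite e_sym.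
    by rewrite e_sym.
  have cy : y \in comp_in e setT y by rewrite inE connect0.
  move/forall_inP: (H1 v cv) => /(_ y cy) /implyP.
  rewrite eq_sym yv => /(_ isT) vy.
  by move: yX; rewrite inE yH vy.
move: yG; rewrite /G0set inE /is_type (negbTE yU) /= => /andP [/andP [_ d1] _].
have xU : x \notin U by rewrite (U_edge e_sym xy).
have xN : x \in [set u in ~: U | e y u] by rewrite in_set in_setC xU e_sym xy.
have : 0 < #|[set u in ~: U | e y u] :\ x|.
  move: d1; rewrite /degGU (cardsD1 x) xN; case: #|_| => //.
case/card_gt0P => u; rewrite in_setD1 in_set => /andP [ux /andP [_ yu]].
exists u => //; apply/negP => uH.
apply: (commX xX (yH0 u uH yu) xy (_ : e u y) yv (_ : x != u)); by rewrite 1?e_sym // eq_sym.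
Qed.

Lemma bound (W Jl : {set T}) : (forall w, w \in W -> w \notin H /\ exists2 y, y \in Y0s & e w y) ->
  independent e W -> Jl \subset v |: (Xs :|: Y0s) -> independent e Jl ->
  #|Jl| <= #|Y0s :&: avoid e H W| + 2.
Proof.
move=> Wg iW JlS iJl.
pose C := v |: (Zs :|: (Y0s :&: avoid e H W)).
have wv : forall w, w \in W -> ~~ e v w.
  move=> w /Wg [wH [y y0 wy]]; rewrite e_sym; exact: (wfacts wH y0 wy).1.
have wz : forall w z, w \in W -> z \in Zs -> ~~ e z w.
  move=> w z /Wg [wH [y y0 wy]] zZ; rewrite e_sym; exact: (wfacts wH y0 wy).2.
have Y0Y : forall y, y \in Y0s -> y \in Ys by move=> y /Y0P [].
have RH : Rs \subset H.
  apply/subsetP => r; rewrite /Rs in_setU1 in_setU => /orP [/eqP ->//|/orP [/XP []//|/YP []//]].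
have CR : #|C :&: Rs| <= #|Y0s :&: avoid e H W| + 1.
  have sub : C :&: Rs \subset v |: (Y0s :&: avoid e H W).
    apply/subsetP => x /setIP [xC xR]; move: xC.
    rewrite /C !in_setU1 in_setU => /orP [->//|/orP [xZ|->]].
      by have [_ xR' _] := ZP xZ; move: xR'; rewrite xR.
    by rewrite orbT.
  apply: leq_trans (subset_leq_card sub) _.
  by rewrite cardsU1 addnC leq_add2l leq_b1.
have nvz : forall z, z \in Zs -> ~~ e v z.
  move=> z /ZP [zH zR _]; apply/negP => vz.
  have zX : z \in Xs by rewrite inE zH vz.
  by move: zR; rewrite (XR zX).
have nvy : forall y, y \in Ys -> ~~ e v y.
  move=> y /YP [yH _ yX _]; apply/negP => vy.
  by move: yX; rewrite inE yH vy.
have nzy : forall z y, z \in Zs -> y \in Y0s -> ~~ e z y.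
  move=> z y /ZP [zH zR _] /Y0P [_ yH0]; apply/negP => zy.
  have zX := yH0 z zH (etrans (e_sym _ _) zy).
  by move: zR; rewrite (XR zX).
have := @localW _ _ e_sym e_irr H W C Rs Jl awc HG0 Hcl.
move=> L; apply: (leq_trans (L _ _ _ _ _ _ _ _ _)); first last.
- by move: CR; lia.
- move=> j u jJ uH uR ju.
  move: (subsetP JlS j jJ); rewrite in_setU1 in_setU => /orP [/eqP E|/orP [jX|jY0]].
    subst j; have uX : u \in Xs by rewrite inE uH ju.
    by move: uR; rewrite (XR uX).
  + have uY : u \in Ys.
      rewrite inE uH /=; apply/and3P; split.
      * by apply: contra uR => /eqP ->; exact: vR.
      * by apply: contra uR; exact: XR.
      * by apply/exists_inP; exists j.
    by move: uR; rewrite (YR uY).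
  + have [_ yH0] := Y0P jY0.
    by move: uR; rewrite (XR (yH0 u uH ju)).
- exact: iJl.
- apply: (subset_trans JlS); apply/subsetP => x.
  rewrite /Rs !in_setU1 !in_setU => /orP [->//|/orP [->|/Y0Y ->]]; by rewrite !orbT.
- move=> r rR rD rC.
  move: rR; rewrite /Rs in_setU1 in_setU => /orP [/eqP E|/orP [rX|rY]].
    by move: rC; rewrite E /C in_setU1 eqxx.
    by exists v; [rewrite /C in_setU1 eqxx | have [_ ?] := XP rX; rewrite e_sym].
  case: (boolP (r \in Y0s)) => ry0.
    by move: rC; rewrite /C in_setU1 in_setU in_setI ry0 rD !orbT.
  have [rH rv rX _] := YP rY.
  move: ry0; rewrite inE rY /= => /forall_inPn [u uH]; rewrite negb_imply => /andP [ru uX].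
  exists u; last by [].
  rewrite /C in_setU1 in_setU; apply/orP; right; apply/orP; left.
  rewrite inE uH /=; apply/andP; split; last by apply/exists_inP; exists r.
  rewrite /Rs in_setU1 in_setU (negbTE uX) /= negb_or; apply/andP; split.
    apply/negP => /eqP E; subst u.
    by move: rX; rewrite inE rH e_sym ru.
  by apply/negP => uY; move: (iY rY uY); rewrite ru.
- exact: RH.
- apply/indepP => x y; rewrite /C !in_setU1 !in_setU !in_setI.
  move=> /orP [/eqP ->|/orP [xZ|/andP [xY0 _]]] /orP [/eqP ->|/orP [yZ|/andP [yY0 _]]].
  + by rewrite e_irr.
  + exact: nvz.
  + exact: nvy (Y0Y _ yY0).
  + by rewrite e_sym; apply: nvz.
  + exact: iZ.
  + exact: nzy.
  + by rewrite e_sym; apply: nvy (Y0Y _ xY0).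
  + by rewrite e_sym; apply: nzy.
  + exact: iY (Y0Y _ xY0) (Y0Y _ yY0).
- apply/subsetP => x; rewrite /C in_setU1 in_setU => /orP [/eqP ->|/orP [xZ|]].
  + by rewrite inE vH /=; apply/forall_inP => w wW; exact: wv.
  + have [xH _ _] := ZP xZ.
    by rewrite inE xH /=; apply/forall_inP => w wW; exact: wz.
  + by rewrite in_setI => /andP [].
- exact: iW.
- by move=> w /Wg [].
Qed.


Lemma avoid_out (W : {set T}) y w : w \in W -> e y w -> y \notin avoid e H W.
Proof.
move=> wW yw; rewrite inE negb_and; apply/orP; right.
by apply/forall_inPn; exists w => //; rewrite yw.
Qed.

Lemma deg_le2 : #|Xs| <= 2.
Proof.
rewrite leqNgt; apply/negP => X3.
have iXs : independent e Xs by apply/indepP => x x' xX x'X; exact: iX.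
have Y0Y : forall y, y \in Y0s -> y \in Ys by move=> y /Y0P [].
have Y0X : forall y, y \in Y0s -> y \notin Xs by move=> y /Y0Y /YP [].
have XsS : Xs \subset v |: (Xs :|: Y0s).
  by apply/subsetP => x xX; rewrite in_setU1 in_setU xX orbT.
case: (ltngtP #|Y0s| 1) => [lt1 | gt1 | eq1].
- have Wg0 : forall w, w \in set0 -> w \notin H /\ exists2 y, y \in Y0s & e w y.
    by move=> w; rewrite inE.
  have i0 : independent e set0 by apply/indepP => x y; rewrite inE.
  have B := bound Wg0 i0 XsS iXs.
  have c0 : #|Y0s :&: avoid e H set0| <= #|Y0s| by apply: subset_leq_card; exact: subsetIl.
  move: B c0 X3 lt1; lia.
-
  have [y1 y1Y] : exists y1, y1 \in Y0s by apply/card_gt0P; lia.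
  have [y2 y2Y] : exists y2, y2 \in Y0s :\ y1.
    apply/card_gt0P; move: gt1; rewrite (cardsD1 y1) y1Y; lia.
  move: y2Y; rewrite in_setD1 => /andP [y21 y2Y].
  have [y1H y1v y1X [x1 x1X x1y1]] := YP (Y0Y _ y1Y).
  have [y2H y2v y2X [x2 x2X x2y2]] := YP (Y0Y _ y2Y).
  have [x1H vx1] := XP x1X. have [x2H vx2] := XP x2X.
  have [w1 w1H y1w1] := outnbr y1Y.
  have [w2 w2H y2w2] := outnbr y2Y.
  have [W [Wg iW a1 a2]] : exists W : {set T},
      [/\ forall w, w \in W -> w \notin H /\ exists2 y, y \in Y0s & e w y,
          independent e W, y1 \notin avoid e H W & y2 \notin avoid e H W].
    case: (boolP (e w1 y2)) => w1y2.
      exists [set w1]; split.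
      + by move=> w; rewrite in_set1 => /eqP ->; split => //; exists y1 => //; rewrite e_sym.
      + by apply/indepP => a b; rewrite !in_set1 => /eqP -> /eqP ->; rewrite e_irr.
      + by apply: (avoid_out (w := w1)); rewrite ?in_set1.
      + by apply: (avoid_out (w := w1)); rewrite ?in_set1 // e_sym.
    case: (boolP (e w2 y1)) => w2y1.
      exists [set w2]; split.
      + by move=> w; rewrite in_set1 => /eqP ->; split => //; exists y2 => //; rewrite e_sym.
      + by apply/indepP => a b; rewrite !in_set1 => /eqP -> /eqP ->; rewrite e_irr.
      + by apply: (avoid_out (w := w2)); rewrite ?in_set1 // e_sym.
      + by apply: (avoid_out (w := w2)); rewrite ?in_set1.
    have nw12 : ~~ e w1 w2.
      apply/negP => w12.
      have y1R := YR (Y0Y _ y1Y). have y2R := YR (Y0Y _ y2Y).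
      have x1R := XR x1X. have x2R := XR x2X. have vR' := vR.
      have y12 : y1 != y2 by rewrite eq_sym.
      case: (eqVneq x1 x2) => [E|x12].
        subst x2.
        apply: (cyc5 e_sym e_irr free (_ : e w1 y1) (_ : e y1 x1) x2y2 y2w2 (_ : e w2 w1));
          rewrite 1?e_sym //; dist.
      apply: (cyc7 e_sym e_irr free (_ : e w1 y1) (_ : e y1 x1) (_ : e x1 v) vx2 x2y2 y2w2
        (_ : e w2 w1)); rewrite 1?e_sym //; dist.
    exists [set w1; w2]; split.
    + move=> w; rewrite !inE => /orP [/eqP ->|/eqP ->]; split => //.
        by exists y1 => //; rewrite e_sym.
      by exists y2 => //; rewrite e_sym.
    + apply/indepP => a b; rewrite !inE => /orP [/eqP ->|/eqP ->] /orP [/eqP ->|/eqP ->];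
        rewrite ?e_irr //; by rewrite e_sym.
    + by apply: (avoid_out (w := w1)); rewrite ?inE ?eqxx.
    + by apply: (avoid_out (w := w2)); rewrite ?inE ?eqxx ?orbT.
  have [t [tS tY0 tind]] : exists t, [/\ t \in v |: Xs, t \notin Y0s &
      forall y, y \in Y0s -> ~~ e t y].
    case: (boolP [forall x in Xs, exists y in Y0s, e x y]) => Hall.
      exists v; split; first by rewrite in_setU1 eqxx.
        by apply/negP => /Y0Y; rewrite (negbTE vY).
      by move=> y /Y0Y /YP [yH _ yX _]; apply/negP => vy; move: yX; rewrite inE yH vy.
    move/forall_inPn: Hall => [x xX] Hx.
    exists x; split; first by rewrite in_setU1 xX orbT.
      by apply/negP => /Y0X; rewrite xX.
    by move=> y yY; apply/negP => xy; move/exists_inP: Hx; apply; exists y.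
  pose Jl := t |: Y0s.
  have JlS : Jl \subset v |: (Xs :|: Y0s).
    apply/subsetP => u; rewrite /Jl in_setU1 => /orP [/eqP ->|uY].
      by move: tS; rewrite !in_setU1 in_setU => /orP [->|->]; rewrite ?orbT.
    by rewrite in_setU1 in_setU uY !orbT.
  have iJl : independent e Jl.
    apply/indepP => a b; rewrite /Jl !in_setU1 => /orP [/eqP ->|aY] /orP [/eqP ->|bY].
    + by rewrite e_irr.
    + exact: tind.
    + by rewrite e_sym; apply: tind.
    + exact: iY (Y0Y _ aY) (Y0Y _ bY).
  have B := bound Wg iW JlS iJl.
  have cJ : #|Jl| = #|Y0s|.+1 by rewrite /Jl cardsU1 tY0.
  have cA : #|Y0s :&: avoid e H W| <= #|Y0s| - 2.
    have sub : Y0s :&: avoid e H W \subset Y0s :\: [set y1; y2].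
      apply/subsetP => u; rewrite in_setI in_setD in_set2 => /andP [uY uA].
      rewrite uY andbT negb_or; apply/andP; split; apply/negP => /eqP E; subst u.
        by move: a1; rewrite uA.
      by move: a2; rewrite uA.
    apply: leq_trans (subset_leq_card sub) _.
    rewrite cardsD.
    have -> : Y0s :&: [set y1; y2] = [set y1; y2].
      apply/setIidPr; apply/subsetP => u; rewrite in_set2 => /orP [/eqP ->|/eqP ->]; [exact: y1Y|exact: y2Y].
    by rewrite cards2 eq_sym y21.
  move: B cA gt1; rewrite cJ; exact: arith2.
- move/eqP/cards1P: eq1 => [y Y0y].
  have y0 : y \in Y0s by rewrite Y0y inE.
  have [yH yv yX [x xX xy]] := YP (Y0Y y y0).
  have [w wH yw] := outnbr y0.
  pose Jl := y |: (Xs :\ x).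
  have := @bound [set w] Jl.
  have c0 : #|Y0s :&: avoid e H [set w]| = 0.
    apply/eqP; rewrite cards_eq0; apply/eqP/setP => u; rewrite in_setI Y0y in_set1 in_set0.
    by apply/negP => /andP [/eqP -> ]; apply/negP; apply: (avoid_out (W := [set w])); rewrite ?in_set1.
  have cJ : #|Jl| = #|Xs|.
    by rewrite cardsU1 in_setD1 (negbTE yX) andbF /= (cardsD1 x Xs) xX.
  rewrite c0 cJ => H1; move: X3; rewrite ltnNge => /negP; apply; apply: H1.
  + move=> u; rewrite in_set1 => /eqP ->; split => //; exists y => //; by rewrite e_sym.
  + by apply/indepP => a b; rewrite !in_set1 => /eqP -> /eqP ->; rewrite e_irr.
  + apply/subsetP => u; rewrite /Jl in_setU1 in_setD1 => /orP [/eqP ->|/andP [_ uX]].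
      by rewrite in_setU1 in_setU y0 !orbT.
    by rewrite in_setU1 in_setU uX orbT.
  + apply/indepP => a b; rewrite /Jl !in_setU1 !in_setD1.
    have nyx : forall x', x' \in Xs -> x' != x -> ~~ e y x'.
      move=> x' x'X x'x; apply/negP => yx'.
      by apply: (commX xX x'X xy (_ : e x' y) yv); rewrite 1?e_sym // eq_sym.
    move=> /orP [/eqP ->|/andP [ax aX]] /orP [/eqP ->|/andP [bx bX]].
    * by rewrite e_irr.
    * exact: nyx.
    * by rewrite e_sym; apply: nyx.
    * exact: iX.
Qed.

End PartA.

Section Longest.
Variables (T : finType) (e : rel T).
Hypothesis e_sym : symmetric e.
Hypothesis e_irr : irreflexive e.
Variables (H : {set T}) (p : seq T) (x0 : T) (n : nat).
Hypothesis psz : size p = n.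
Local Notation q := (nth x0 p).
Hypothesis pu : uniq p.
Hypothesis pH : forall x, x \in p -> x \in H.
Hypothesis pn : 0 < n.
Hypothesis pe : forall i, i.+1 < n -> e (q i) (q i.+1).
Hypothesis deg2 : forall u, u \in H -> #|[set w in H | e u w]| <= 2.
Hypothesis end0 : forall u, u \in H -> e (q 0) u -> u \in p.
Hypothesis end1 : forall u, u \in H -> e (q n.-1) u -> u \in p.

Lemma qinj i j : i < n -> j < n -> (q i == q j) = (i == j).
Proof. by move=> ??; rewrite nth_uniq ?psz. Qed.

Lemma qH i : i < n -> q i \in H.
Proof. by move=> ?; apply: pH; rewrite mem_nth ?psz. Qed.

Lemma internal k u : 0 < k -> k.+1 < n -> u \in H -> e (q k) u -> (u = q k.-1) \/ (u = q k.+1).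
Proof.
move=> k0 kn uH ku.
case: (eqVneq u (q k.-1)) => [->|u1]; first by left.
case: (eqVneq u (q k.+1)) => [->|u2]; first by right.
have d := deg2 (qH (ltnW kn)).
have s : [set q k.-1; q k.+1; u] \subset [set w in H | e (q k) w].
  apply/subsetP => w; rewrite !inE => /orP [/orP [/eqP ->|/eqP ->]|/eqP ->].
  - rewrite qH /=; last lia.
    have := @pe k.-1; rewrite prednK // => /(_ (ltnW kn)).
    by rewrite e_sym.
  - by rewrite qH // pe.
  - by rewrite uH ku.
have := subset_leq_card s; rewrite -setUA cardsU1 cards2 !inE negb_or.
rewrite qinj; try lia.
rewrite [q k.-1 == u]eq_sym (negbTE u1) [q k.+1 == u]eq_sym (negbTE u2) /=.
have -> : (k.-1 == k.+1) = false by apply/eqP; lia.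
move=> H3; move: (leq_trans H3 d); by [].
Qed.

Lemma nbr_in_p k u : k < n -> u \in H -> e (q k) u -> u \in p.
Proof.
move=> kn uH ku.
case: (posnP k) => [k0|k0]; first by subst k; apply: end0.
case: (ltnP k.+1 n) => kn'.
  by case: (internal k0 kn' uH ku) => ->; apply: mem_nth; rewrite psz; lia.
have kE : k = n.-1 by lia.
by apply: end1 => //; rewrite -kE.
Qed.

Lemma adj_lt i j : i < j -> j < n ->
  e (q i) (q j) = (j == i.+1) || [&& i == 0, j == n.-1 & e (q 0) (q n.-1)].
Proof.
move=> ij jn.
case: (eqVneq j i.+1) => [E|ji] /=; first by subst j; rewrite pe.
apply/idP/idP; last first.
  by case/and3P => /eqP -> /eqP -> ->.
move=> eij.
case: (ltnP j.+1 n) => jn'.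
  have j0 : 0 < j by lia.
  have [E|E] := internal j0 jn' (qH (ltn_trans ij jn)) (etrans (e_sym _ _) eij).
  - by move/eqP: E; rewrite qinj; lia.
  - by move/eqP: E; rewrite qinj; lia.
have jE : j = n.-1 by lia.
case: (posnP i) => [i0|i0].
  by subst i; rewrite jE eqxx /=; rewrite -jE.
have i1 : i.+1 < n by lia.
have [E|E] := internal i0 i1 (qH jn) eij.
- by move/eqP: E; rewrite qinj; lia.
- by move/eqP: E; rewrite qinj; lia.
Qed.


Lemma adj_path : ~~ (e (q 0) (q n.-1) && (2 < n)) ->
  forall i j, i < n -> j < n -> e (q i) (q j) = path_adj i j.
Proof.
move=> ncl.
have key : forall i j, i < j -> j < n -> e (q i) (q j) = (j == i.+1).
  move=> i j ij jn; rewrite adj_lt //.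
  case: (eqVneq j i.+1) => //= ji.
  apply/and3P => [[/eqP i0 /eqP jn1 cl]]; move: ncl; rewrite cl /=; lia.
move=> i j iN jN; rewrite /path_adj.
case: (ltngtP i j) => [ij|ji|E].
- rewrite key //; have -> : (i == j.+1) = false by apply/eqP; lia.
  by rewrite orbF.
- rewrite e_sym key //; have -> : (j == i.+1) = false by apply/eqP; lia.
  by [].
- by subst j; rewrite e_irr; apply/esym/orP => [[]] /eqP; lia.
Qed.

Lemma adj_cyc : e (q 0) (q n.-1) -> 2 < n ->
  forall i j, i < n -> j < n -> e (q i) (q j) = cyc_adj n i j.
Proof.
move=> cl n2.
have key : forall i j, i < j -> j < n -> e (q i) (q j) = cyc_adj n i j.
  move=> i j ij jn; rewrite adj_lt // cl andbT /cyc_adj modn_small; last lia.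
  rewrite modnS.
  case: (eqVneq j n.-1) => [jE|jn1].
    have -> : n %| j.+1 by rewrite jE prednK ?dvdnn //; lia.
    rewrite andbT; case: (eqVneq j i.+1) => //=.
  rewrite andbF orbF.
  have -> : n %| j.+1 = false.
    apply/negP => /dvdn_leq; lia.
  rewrite modn_small //; case: (eqVneq i (j.+1)) => [?|]; [lia|by rewrite orbF].
move=> i j iN jN.
case: (ltngtP i j) => [ij|ji|E].
- exact: key.
- by rewrite e_sym key // /cyc_adj orbC.
- subst j; rewrite e_irr /cyc_adj orbb; apply/esym/eqP => E.
  case: (ltnP i.+1 n) => h.
    by move: E; rewrite modn_small //; lia.
  have h' : i.+1 = n by lia.
  by move: E; rewrite h' modnn; lia.
Qed.

Hypothesis Hp : forall u, u \in H -> u \in p.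

Lemma memq (L : seq nat) i : i < n -> all (fun k => k < n) L -> (q i \in map q L) = (i \in L).
Proof.
move=> iN /allP LN; apply/mapP/idP => [[j jL /eqP]|iL]; last by exists i.
by rewrite qinj // ?LN // => /eqP ->.
Qed.

Lemma card_mapq (L : seq nat) : all (fun k => k < n) L -> uniq L -> #|[set x in map q L]| = size L.
Proof.
move=> /allP LN uL.
have uM : uniq (map q L).
  by rewrite map_inj_in_uniq // => a b aL bL /eqP; rewrite qinj ?LN // => /eqP.
rewrite -(size_map q L) -(card_uniqP uM); apply: eq_card => x; by rewrite inE.
Qed.

Hypothesis awc : alpha e - indep_dom e = 1.
Hypothesis HG0 : H \subset G0set e.
Hypothesis Hcl : forall h t, h \in H -> t \in G0set e -> e h t -> t \in H.

Lemma localidx (A : nat -> nat -> bool) (LR LC LJ : seq nat) :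
  (forall i j, i < n -> j < n -> e (q i) (q j) = A i j) ->
  all (fun i => i < n) LR -> uniq LC -> uniq LJ -> all (mem LR) LC -> all (mem LR) LJ ->
  all (fun i => all (fun j => ~~ A i j) LC) LC ->
  all (fun i => (i \in LC) || has (A i) LC) LR ->
  all (fun i => all (fun j => ~~ A i j) LJ) LJ ->
  (forall i k, i \in LJ -> k < n -> k \notin LR -> A i k -> has (A k) LC) ->
  size LJ <= size LC + 1.
Proof.
move=> eA LRn uC uJ /allP CR /allP JR c1 c2 c3 c4.
have Rn : forall i, i \in LR -> i < n by move/allP: LRn.
have Cn : all (fun k => k < n) LC by apply/allP => i /CR /Rn.
have Jn : all (fun k => k < n) LJ by apply/allP => i /JR /Rn.
have mq : forall (L : seq nat) x, x \in [set x in map q L] -> exists2 i, i \in L & x = q i.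
  by move=> L x; rewrite inE => /mapP.
rewrite -(card_mapq Jn uJ) -(card_mapq Cn uC).
apply: leq_trans (_ : _ <= #|[set x in map q LC] :&: [set x in map q LR]| + 1) _.
  2: by rewrite leq_add2r; apply: subset_leq_card; apply: subsetIl.
apply: (@localW _ _ e_sym e_irr H set0 [set x in map q LC] [set x in map q LR]
   [set x in map q LJ] awc HG0 Hcl).
- by move=> w; rewrite inE.
- by apply/indepP => x y; rewrite inE.
- apply/subsetP => x /mq [i iC ->]; rewrite inE qH /=; last by move/allP: Cn; apply.
  by apply/forall_inP => w; rewrite inE.
- apply/indepP => x y /mq [i iC ->] /mq [j jC ->].
  rewrite eA; [|by move/allP: Cn; apply|by move/allP: Cn; apply].
  by move/allP: c1 => /(_ i iC) /allP /(_ j jC).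
- by apply/subsetP => x /mq [i iR ->]; apply: qH; apply: Rn.
- move=> r /mq [i iR ->] _; have iN := Rn i iR; rewrite inE memq //.
  move=> iC; move/allP: c2 => /(_ i iR); rewrite (negbTE iC) /= => /hasP [j jC Aij].
  exists (q j); first by rewrite inE map_f.
  by rewrite eA //; move/allP: Cn => /(_ j jC).
- apply/subsetP => x /mq [i iJ ->]; rewrite inE map_f //; exact: JR.
- apply/indepP => x y /mq [i iJ ->] /mq [j jJ ->].
  rewrite eA; [|by move/allP: Jn; apply|by move/allP: Jn; apply].
  by move/allP: c3 => /(_ i iJ) /allP /(_ j jJ).
- move=> x u /mq [i iJ ->] uH uR.
  have up := Hp uH.
  have kN : index u p < n by rewrite -psz index_mem.
  have uE : u = q (index u p) by rewrite nth_index.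
  move: uR; rewrite uE inE memq // => kR.
  rewrite eA //; last by move/allP: Jn; apply.
  move=> Aik; have /hasP [j jC Akj] := c4 _ _ iJ kN kR Aik.
  exists (q j); first by rewrite inE map_f.
  by rewrite eA //; move/allP: Cn; apply.
Qed.

End Longest.

Lemma cyc_list n : 2 < n -> n < 14 -> n != 12 -> n \notin [:: 3;4;5;7] -> n \in [:: 6;8;9;10;11;13].
Proof. by do 14! (case: n => [|n] //). Qed.
Lemma path_list n : 0 < n -> n < 11 -> n != 9 -> n \in [:: 1;2;3;4;5;6;7;8;10].
Proof. by do 11! (case: n => [|n] //). Qed.
Definition Acyc n i j := (j == i.+1) || (i == j.+1) || ((i == 0) && (j == n.-1)) || ((j == 0) && (i == n.-1)).
Lemma modS_small i n : i < n -> i.+1 %% n = if i == n.-1 then 0 else i.+1.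
Proof.
move=> iN; case: (eqVneq i n.-1) => [E|E].
  have -> : i.+1 = n by lia.
  exact: modnn.
by rewrite modn_small //; lia.
Qed.
Lemma cycA n i j : 2 < n -> i < n -> j < n -> cyc_adj n i j = Acyc n i j.
Proof.
move=> n2 iN jN; rewrite /cyc_adj /Acyc !modS_small //.
case: (eqVneq i n.-1) => [Ei|Ei]; case: (eqVneq j n.-1) => [Ej|Ej] /=.
all: apply/idP/idP.
all: try (move=> /orP [] /eqP; lia).
all: lia.
Qed.

Section Final.
Variables (T : finType) (e : rel T).
Hypothesis e_sym : symmetric e.
Hypothesis e_irr : irreflexive e.
Hypothesis free : forall k, k \in [:: 3; 4; 5; 7] -> ~ has_induced e k (cyc_adj k).
Hypothesis awc : almost_well_covered e.
Local Notation G0 := (G0set e).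

Variable x : T.
Hypothesis xG0 : x \in G0.
Local Notation H := (comp_in e G0 x).

Lemma inH u : (u \in H) = connect (restr e G0) x u.
Proof. by rewrite /comp_in inE. Qed.

Lemma HG0 : H \subset G0.
Proof.
apply/subsetP => u; rewrite inH => /connectP [s pth ->].
case/lastP: s pth => [//|s y]; rewrite rcons_path last_rcons => /andP [_].
by case/and3P => _ ->.
Qed.

Lemma Hcl h t : h \in H -> t \in G0 -> e h t -> t \in H.
Proof.
move=> hH tG ht; have hG := subsetP HG0 h hH.
move: hH; rewrite !inH => xh; apply: (connect_trans xh); apply: connect1.
by rewrite /restr hG tG ht.
Qed.

Lemma xH : x \in H. Proof. by rewrite inH connect0. Qed.

Definition gp (s : seq T) := if s is a :: r then [&& uniq s, all (fun y => y \in H) s & path e a r]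
  else false.

Lemma gp_size s : gp s -> size s <= #|T|.
Proof.
case: s => [//|a r] /and3P [u _ _].
by rewrite -(card_uniqP u); apply: max_card.
Qed.

Lemma gp_cons s u : gp s -> u \notin s -> u \in H -> e u (head u s) -> gp (u :: s).
Proof.
case: s => [//|a r] /and3P [us aS ps] uns uH ua.
apply/and3P; split.
- by rewrite cons_uniq uns us.
- by rewrite /= uH; move: aS => /=.
- by rewrite /= ua ps.
Qed.

Lemma gp_rcons s u : gp s -> u \notin s -> u \in H -> e (last u s) u -> gp (rcons s u).
Proof.
case: s => [//|a r] /and3P [us aS ps] uns uH ua.
rewrite rcons_cons; apply/and3P; split.
- by rewrite -rcons_cons rcons_uniq uns us.
- by rewrite -rcons_cons all_rcons uH aS.
- by rewrite rcons_path ps ua.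
Qed.

Lemma main_thm : exists n,
      (n \in [:: 1; 2; 3; 4; 5; 6; 7; 8; 10] /\ induced_iso e H n path_adj) \/
      (n \in [:: 6; 8; 9; 10; 11; 13] /\ induced_iso e H n (cyc_adj n)).
Proof.
pose P := fun m => [exists t : m.-tuple T, gp t].
have P1 : P 1 by apply/existsP; exists [tuple x]; rewrite /= xH.
have ub : forall i, P i -> i <= #|T|.
  by move=> i /existsP [t gt]; rewrite -(size_tuple t); apply: gp_size.
case: (ex_maxnP (ex_intro P 1 P1) ub) => m /existsP [t gt] mmax.
have gpP : forall s, gp s -> size s <= m.
  by move=> s gs; apply: mmax; apply/existsP; exists (in_tuple s).
move: gt; have sz := size_tuple t; move: (tval t) sz => p sz gp_p.
have pn : 0 < m by rewrite -sz; case: p gp_p {sz}.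
have [pu pH pth] : [/\ uniq p, forall y, y \in p -> y \in H & path e (head x p) (behead p)].
  by case: p gp_p {sz pn} => [//|a r] /and3P [? /allP ? ?].
have deg2 : forall u, u \in H -> #|[set w in H | e u w]| <= 2.
  move=> u uH; exact: (@deg_le2 _ _ e_sym e_irr free H u uH awc HG0 Hcl).
have pe : forall i, i.+1 < m -> e (nth x p i) (nth x p i.+1).
  move=> i im; case: p gp_p sz pth {pu pH pn} => [//|a r] _ sz pth.
  move/(pathP x): pth => /(_ i); apply; move: im; by rewrite -sz /= ltnS.
have end0 : forall u, u \in H -> e (nth x p 0) u -> u \in p.
  move=> u uH au; apply: contraT => up.
  have : gp (u :: p).
    apply: gp_cons => //; case: p gp_p au {sz pn pu pH pth up pe} => [//|a r] _ au.
    by rewrite /= e_sym.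
  by move/gpP; rewrite /= sz ltnn.
have end1 : forall u, u \in H -> e (nth x p m.-1) u -> u \in p.
  move=> u uH au; apply: contraT => up.
  have : gp (rcons p u).
    apply: gp_rcons => //; move: au; rewrite -sz nth_last.
    by case: p gp_p {sz pn pu pH pth up pe end0} => [//|a r].
  by move/gpP; rewrite size_rcons sz ltnn.
have Hp : forall u, u \in H -> u \in p.
  have cl : closed (restr e G0) [pred z | z \in p].
    move=> y z /and3P [yG zG yz] /=.
    have gen : forall y z, y \in G0 -> z \in G0 -> e y z -> y \in p -> z \in p.
      move=> y' z' _ z'G y'z' y'p.
      have kN : index y' p < m by rewrite -sz index_mem.
      apply: (nbr_in_p e_sym sz pu pH pn pe deg2 end0 end1 kN).
        exact: Hcl (pH _ y'p) z'G y'z'.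
      by rewrite nth_index.
    apply/idP/idP; first exact: gen.
    by apply: gen; rewrite // e_sym.
  have ap : nth x p 0 \in p by rewrite mem_nth // sz.
  have xp : x \in p.
    have := closed_connect cl (_ : connect (restr e G0) x (nth x p 0)).
    by rewrite !inE ap => ->; rewrite // -inH; apply: pH.
  move=> u; rewrite inH => xu.
  by have := closed_connect cl xu; rewrite !inE xp => <-.
have iso : forall A, (forall i j, i < m -> j < m -> e (nth x p i) (nth x p j) = A i j) ->
    induced_iso e H m A.
  move=> A eA; exists (fun i : 'I_m => nth x p i); split.
  - move=> i j /eqP; rewrite (qinj x sz pu (ltn_ord i) (ltn_ord j)) => /eqP; exact: val_inj.
  - apply/setP => u; apply/idP/imsetP => [uH|[i _ ->]].
      have up := Hp u uH.
      have kN : index u p < m by rewrite -sz index_mem.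
      exists (Ordinal kN); first by rewrite in_setT.
      by rewrite /= nth_index.
    exact: (qH x sz pH (ltn_ord i)).
  - by move=> i j; apply: eA.
have LI := localidx (x0 := x) e_sym e_irr sz pu pH Hp awc HG0 Hcl.
have iotaN : forall k, k <= m -> all (fun i => i < m) (iota 0 k).
  by move=> k km; apply/allP => i; rewrite mem_iota; lia.
exists m.
case: (boolP (e (nth x p 0) (nth x p m.-1) && (2 < m))) => [/andP [cl m2]|ncl].
- have eA := adj_cyc e_sym e_irr sz pu pH pn pe deg2 cl m2.
  right; split; last exact: iso.
  apply: cyc_list => //.
  + rewrite ltnNge; apply/negP => m14.
    have eA' : forall i j, i < m -> j < m -> e (nth x p i) (nth x p j) = Acyc m i j.
      by move=> i j im jm; rewrite eA // cycA.
    have := LI (Acyc m) (iota 0 13) [:: 0; 3; 6; 9; 12] [:: 0; 2; 4; 6; 8; 10; 12] eA' (iotaN 13 (ltnW m14)).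
    have -> : m = 14 + (m - 14) by lia.
    move: (m - 14) => k.
    move=> L; have {}L := L isT isT isT isT isT isT isT.
    suff : 7 <= 6 by [].
    apply: L => i k0 iJ k0n k0R.
    have k013 : 13 <= k0 by move: k0R; rewrite mem_iota; lia.
    have i12 : i <= 12 by have := allP (isT : all (fun i => i <= 12) [:: 0; 2; 4; 6; 8; 10; 12]) i iJ.
    rewrite /Acyc => /orP [/orP [/orP [/eqP E| /eqP E] | /andP [/eqP i0 /eqP E]] | /andP [/eqP E _]].
    * have -> : k0 = 13 by lia.
      by apply/hasP; exists 12.
    * lia.
    * by apply/hasP; exists 0 => //; rewrite /Acyc E !eqxx andbT orbT.
    * lia.
  + apply/negP => /eqP m12.
    have eA12 : forall i j, i < m -> j < m -> e (nth x p i) (nth x p j) = cyc_adj 12 i j.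
      by rewrite -m12.
    have := LI (cyc_adj 12) (iota 0 12) [:: 0; 3; 6; 9] [:: 0; 2; 4; 6; 8; 10] eA12
      (iotaN 12 (eq_leq (esym m12))).
    move=> L; have {}L := L isT isT isT isT isT isT isT.
    suff : 6 <= 5 by [].
    apply: L => i k _ k12.
    by rewrite mem_iota; lia.
  + apply/negP => mbad; apply: (free mbad).
    have [f [fi _ fe]] := iso _ eA.
    by exists f.
- have eA := adj_path e_sym e_irr sz pu pH pn pe deg2 ncl.
  left; split; last exact: iso.
  apply: path_list => //.
  + rewrite ltnNge; apply/negP => m11.
    have := LI path_adj (iota 0 11) [:: 1; 4; 7; 10] [:: 0; 2; 4; 6; 8; 10] eA (iotaN 11 m11).
    move=> L; have {}L := L isT isT isT isT isT isT isT.
    suff : 6 <= 5 by [].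
    apply: L => i k iJ kn kR.
    have k11 : 11 <= k by move: kR; rewrite mem_iota; lia.
    have i10 : i <= 10 by have := allP (isT : all (fun i => i <= 10) [:: 0; 2; 4; 6; 8; 10]) i iJ.
    rewrite /path_adj => /orP [/eqP E|/eqP E]; last lia.
    have -> : k = 11 by lia.
    by [].
  + apply/negP => /eqP m9.
    have eA9 : forall i j, i < m -> j < m -> e (nth x p i) (nth x p j) = path_adj i j by [].
    have := LI path_adj (iota 0 9) [:: 1; 4; 7] [:: 0; 2; 4; 6; 8] eA9 (iotaN 9 (eq_leq (esym m9))).
    move=> L; have {}L := L isT isT isT isT isT isT isT.
    suff : 5 <= 4 by [].
    apply: L => i k _ k9.
    by rewrite mem_iota; lia.
Qed.
End Final.


Unset Implicit Arguments.

Theorem corollary20 (T : finType) (e : rel T)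
  (e_sym : symmetric e) (e_irr : irreflexive e)
  (free : forall k, k \in [:: 3; 4; 5; 7] -> ~ has_induced e k (cyc_adj k))
  (awc : almost_well_covered e)
  (no_type2 : forall x, ~~ is_type e x 2) :
  forall x, x \in G0set e ->
    exists n,
      (n \in [:: 1; 2; 3; 4; 5; 6; 7; 8; 10] /\
         induced_iso e (comp_in e (G0set e) x) n path_adj) \/
      (n \in [:: 6; 8; 9; 10; 11; 13] /\
         induced_iso e (comp_in e (G0set e) x) n (cyc_adj n)).
Proof.
move=> x xG0.
exact: (@main_thm T e e_sym e_irr free awc x xG0).
Qed.
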